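(* Let $\Omega\subset\mathbb{R}^2$ be open, $\lambda>0$, and let $u\in L^2(\Omega)$ satisfy $-\Delta u=\lambda u$ in $\Omega$. Let $\mathbf{x}_0\in\Omega$, $h>0$, $\alpha\in(0,1)$, and let $\mathbf{e}^-,\mathbf{e}^+$ be unit vectors with angle $\alpha\pi$ from $\mathbf{e}^-$ to $\mathbf{e}^+$; put $\Gamma^\pm=\{\mathbf{x}_0+t\mathbf{e}^\pm:0\le t\le h\}\subset\Omega$. Suppose $\Gamma^+$ is a singular line of $u$ ($\partial_\nu u=0$ on $\Gamma^+$) and $\Gamma^-$ is a generalized singular line of $u$ with constant parameter $\eta_1\equiv C_1\neq0$. Let $n\in\mathbb{N}$, $n\ge3$. If $u(\mathbf{x}_0)=0$ and $\alpha\neq q/p$ for all integers $1\le q<p\le n-1$, then $u$ vanishes up to the order $n$ at $\mathbf{x}_0$, i.e. all partial derivatives of $u$ of order at most $n-1$ vanish at $\mathbf{x}_0$.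
   Context: No boundary condition is imposed on $\partial\Omega$; $u$ is real-analytic in $\Omega$. $\nu$ denotes a unit normal to the segment in question. A generalized singular line with parameter $\eta$ is a segment on which $\partial_\nu u+\eta u=0$. ''Vanishes up to order $n$'' means every homogeneous term of degree $<n$ in the Taylor expansion of $u$ at $\mathbf{x}_0$ vanishes. *)

(* Defs.v *)
From mathcomp Require Import all_boot all_order all_algebra.
From mathcomp Require Import all_classical all_reals all_analysis.
Import Order.TTheory GRing.Theory Num.Theory.
Import numFieldNormedType.Exports.
Set Implicit Arguments. Unset Strict Implicit. Unset Printing Implicit Defensive.

Local Open Scope ring_scope.

Section Defs.
Variable R : realType.

Definition dx (f : R * R -> R) : R * R -> R := fun p => 'D_((1:R), (0:R)) f p.
Definition dy (f : R * R -> R) : R * R -> R := fun p => 'D_((0:R), (1:R)) f p.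

Definition pdiff (u : R * R -> R) (i j : nat) : R * R -> R :=
  iter i dx (iter j dy u).

Definition smooth_on (Omega : set (R * R)) (u : R * R -> R) : Prop :=
  forall (i j : nat) (p : R * R), Omega p -> differentiable (pdiff u i j) p.

Definition L2_on (Omega : set (R * R)) (u : R * R -> R) : Prop :=
  ((@lebesgue_measure R) \x (@lebesgue_measure R))%E.-integrable Omega
     (fun p => ((u p) ^+ 2)%:E).

Definition ray_pt (x0 e : R * R) (t : R) : R * R :=
  (x0.1 + t * e.1, x0.2 + t * e.2).

Definition segment (x0 e : R * R) (h : R) : set (R * R) :=
  [set p | exists2 t, 0 <= t <= h & p = ray_pt x0 e t].

Definition normal (e : R * R) : R * R := (- e.2, e.1).

Definition rotate (theta : R) (e : R * R) : R * R :=
  (cos theta * e.1 - sin theta * e.2, sin theta * e.1 + cos theta * e.2).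

Definition unit_vec (e : R * R) : Prop := e.1 ^+ 2 + e.2 ^+ 2 = 1.

Definition singular_line (u : R * R -> R) (x0 e : R * R) (h : R) : Prop :=
  forall p, segment x0 e h p -> 'D_(normal e) u p = 0.

Definition gen_singular_line (u : R * R -> R) (eta : R * R -> R)
    (x0 e : R * R) (h : R) : Prop :=
  forall p, segment x0 e h p -> 'D_(normal e) u p + eta p * u p = 0.

Definition vanishes_up_to (u : R * R -> R) (x0 : R * R) (n : nat) : Prop :=
  forall i j : nat, (i + j < n)%N -> pdiff u i j x0 = 0.

End Defs.

(* Main.v *)
Require Import Defs.
From mathcomp Require Import all_boot all_order all_algebra.
From mathcomp Require Import all_classical all_reals all_analysis.
From mathcomp Require Import ring lra.
Import Order.TTheory GRing.Theory Num.Theory.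
Import numFieldNormedType.Exports.
Local Open Scope classical_set_scope.
Local Open Scope ring_scope.



Section SA.
Variable R : realType.
Variables (V W : normedModType R).

Lemma near_eq_differentiable (f g : V -> W) (p : V) :
  (\near p, f p = g p) -> differentiable f p -> differentiable g p.
Proof.
move=> fg df.
have E : g \o shift p = cst (g p) + 'd f p +o_ 0 id.
  apply/eqaddoP => _/posnumP[e].
  have /eqaddoP /(_ e%:num) := diff_locally df.
  move=> /(_ [gt0 of e%:num]).
  have fg0 : \forall h \near 0, f (h + p) = g (h + p).
    rewrite (near_shift p) /=; near=> h; rewrite /= sub0r addrNK; exact: (near fg h).
  apply: filter_app; near=> h => H.
  move: H; rewrite /= !fctE (near fg0 h) // (nbhs_singleton fg) //.
have dgf : 'd g p = 'd f p :> (V -> W).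
  by apply: (@diff_unique _ _ _ g ('d f p) p _ E); exact: diff_continuous.
apply/diff_locallyP; rewrite dgf; split; [exact: diff_continuous|exact: E].
Unshelve. all: by end_near. Qed.
End SA.


Section SC.
Variable R : realType.
Variables (V : normedModType R).

Lemma line_quot (F : V -> R) (a v : V) (t : R) :
  (fun h : R => h^-1 *: (((fun t => F (a + t *: v)) \o shift t) (h *: (1:R)) - F (a + t *: v)))
  = (fun h : R => h^-1 *: ((F \o shift (a + t *: v)) (h *: v) - F (a + t *: v))).
Proof.
apply/funext => h /=; congr (_ *: (F _ - _)).
by rewrite [h%:A]mulr1 scalerDl addrCA.
Qed.

Lemma line_derive (F : V -> R) (a v : V) (t : R) :
  differentiable F (a + t *: v) ->
  is_derive t 1 (fun t => F (a + t *: v)) ('D_v F (a + t *: v)).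
Proof.
move=> dF; split.
  by rewrite /derivable line_quot; exact: diff_derivable.
by rewrite /derive line_quot.
Qed.

Lemma line_derivable (F : V -> R) (a v : V) (t : R) :
  differentiable F (a + t *: v) -> derivable (fun t : R => F (a + t *: v)) t 1.
Proof. by move=> dF; rewrite /derivable line_quot; exact: diff_derivable. Qed.

Lemma young_est (F : V -> R) (v w p : V) (r : R) :
  0 < r -> (forall q, `|p - q| < r -> differentiable F q) ->
  differentiable ('D_v F) p ->
  forall e, 0 < e -> exists2 d, 0 < d & forall s, 0 < s < d ->
    `|F (p + s*:w + s*:v) - F (p + s*:v) - F (p + s*:w) + F p
       - s^+2 * 'D_w ('D_v F) p| <= e * s^+2.
Proof.
move=> r0 dF dG e e0.
set G := 'D_v F.
set N := `|v| + `|w| + 1.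
have N0 : 0 < N by rewrite /N ltr_pwDr // addr_ge0.
set e' := e / (2 * N).
have e'0 : 0 < e' by rewrite /e' divr_gt0 // mulr_gt0.
have := diff_locally dG => /eqaddoP /(_ e' e'0) /nbhs_normP [d1 d10 Hd1].
exists (Num.min d1 r / N); first by rewrite divr_gt0 // lt_min d10.
move=> s /andP [s0 sd].
have sN : s * N < Num.min d1 r by rewrite -ltr_pdivlMr.
have sNd1 : s * N < d1 by apply: (lt_le_trans sN); rewrite ge_min lexx.
have sNr : s * N < r by apply: (lt_le_trans sN); rewrite ge_min lexx orbT.
have nrm t : 0 <= t <= s -> `|s *: w + t *: v| <= s * N.
  move=> /andP [t0 ts]; rewrite (le_trans (ler_normD _ _)) // !normrZ.
  rewrite (ger0_norm (ltW s0)) (ger0_norm t0) /N mulrDr mulrDr mulr1.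
  have := ler_wpM2r (normr_ge0 v) ts; lra.
have nrm2 t : 0 <= t <= s -> `|t *: v| <= s * N.
  move=> /andP [t0 ts]; rewrite normrZ (ger0_norm t0) /N.
  apply: (le_trans (ler_wpM2r (normr_ge0 _) ts)).
  rewrite /N mulrDr mulrDr mulr1.
  have := mulr_ge0 (ltW s0) (normr_ge0 w); lra.
pose f1 := fun t : R => F (p + s *: w + t *: v).
pose f2 := fun t : R => F (p + t *: v).
have df1 t : 0 <= t <= s -> differentiable F (p + s *: w + t *: v).
  move=> ts; apply: dF; rewrite -addrA opprD addNKr normrN.
  exact: le_lt_trans (nrm t ts) sNr.
have df2 t : 0 <= t <= s -> differentiable F (p + t *: v).
  move=> ts; apply: dF; rewrite opprD addNKr normrN.
  exact: le_lt_trans (nrm2 t ts) sNr.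
have [c cin Hc] : exists2 c, c \in `]0, s[ & (f1 - f2) s - (f1 - f2) 0 =
    (G (p + s *: w + c *: v) - G (p + c *: v)) * (s - 0).
  apply: MVT => //.
    move=> x /[1!in_itv] /= /andP [x0 xs].
    have xs' : 0 <= x <= s by rewrite !ltW.
    apply: is_deriveB; apply: line_derive; [exact: df1|exact: df2].
  apply: derivable_within_continuous => x /[1!in_itv] /= xs.
  have xs' : 0 <= x <= s by [].
  apply: derivableB; apply: line_derivable; [exact: df1|exact: df2].
move: Hc; rewrite !fctE /f1 /f2 !scale0r !addr0 subr0 => Hc.
have cs : 0 <= c <= s by move: cin; rewrite in_itv /= => /andP [? ?]; rewrite !ltW.
set L := 'd G p.
have LwE : 'D_w G p = L w by rewrite deriveE.
have H1 := Hd1 (s *: w + c *: v).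
have H2 := Hd1 (c *: v).
have {H1} H1 := H1 (ltac:(rewrite /ball_ /= sub0r normrN; exact: (le_lt_trans (nrm c cs) sNd1))).
have {H2} H2 := H2 (ltac:(rewrite /ball_ /= sub0r normrN; exact: (le_lt_trans (nrm2 c cs) sNd1))).
move: H1 H2; rewrite !fctE /= => H1 H2.
have Lh1 : L (s *: w + c *: v) = s * L w + L (c *: v).
  by rewrite linearD linearZ.
have E1 : G (p + s *: w + c *: v) = G (s *: w + c *: v + p) by rewrite [s *: w + _ + p]addrC addrA.
have E2 : G (p + c *: v) = G (c *: v + p) by rewrite [c *: v + p]addrC.
rewrite Lh1 in H1.
have -> : F (p + s *: w + s *: v) - F (p + s *: v) - F (p + s *: w) + F p -
    s ^+ 2 * 'D_w G p = s * ((G (s *: w + c *: v + p) - (G p + (s * L w + L (c *: v))))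
      - (G (c *: v + p) - (G p + L (c *: v)))).
  have -> : F (p + s *: w + s *: v) - F (p + s *: v) - F (p + s *: w) + F p =
    F (p + s *: w + s *: v) - F (p + s *: v) - (F (p + s *: w) - F p) by ring.
  rewrite Hc E1 E2 LwE; ring.
rewrite normrM (ger0_norm (ltW s0)).
have : `|(G (s *: w + c *: v + p) - (G p + (s * L w + L (c *: v))))
      - (G (c *: v + p) - (G p + L (c *: v)))| <= e' * (s * N) + e' * (s * N).
  apply: (le_trans (ler_normB _ _)); apply: lerD.
    exact: (le_trans H1 (ler_wpM2l (ltW e'0) (nrm c cs))).
  exact: (le_trans H2 (ler_wpM2l (ltW e'0) (nrm2 c cs))).
have -> : e' * (s * N) + e' * (s * N) = e * s by rewrite /e'; field; rewrite gt_eqF.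
move=> H; rewrite expr2 mulrA [e * s]mulrC -mulrA ler_wpM2l // ?ltW //.
Qed.

Lemma young (F : V -> R) (v w p : V) (r : R) :
  0 < r -> (forall q, `|p - q| < r -> differentiable F q) ->
  differentiable ('D_v F) p -> differentiable ('D_w F) p ->
  'D_w ('D_v F) p = 'D_v ('D_w F) p.
Proof.
move=> r0 dF dv dw.
set a := 'D_w ('D_v F) p; set b := 'D_v ('D_w F) p.
suff H : forall e, 0 < e -> `|a - b| <= e.
  apply/eqP; rewrite -subr_eq0; apply/negPn/negP => ne.
  have h0 : 0 < `|a - b| by rewrite normr_gt0.
  have := H (`|a - b| / 2) ltac:(by rewrite divr_gt0).
  lra.
move=> e e0.
have e20 : 0 < e / 2 by rewrite divr_gt0.
have [d1 d10 H1] := @young_est F v w p r r0 dF dv (e/2) e20.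
have [d2 d20 H2] := @young_est F w v p r r0 dF dw (e/2) e20.
set s := Num.min d1 d2 / 2.
have s0 : 0 < s by rewrite divr_gt0 // lt_min d10.
have sd1 : s < d1.
  apply: (lt_le_trans (y := Num.min d1 d2)); last by rewrite ge_min lexx.
  by rewrite /s ltr_pdivrMr // ltr_pMr ?lt_min ?d10 // ltr1n.
have sd2 : s < d2.
  apply: (lt_le_trans (y := Num.min d1 d2)); last by rewrite ge_min lexx orbT.
  by rewrite /s ltr_pdivrMr // ltr_pMr ?lt_min ?d10 // ltr1n.
have {H1} := H1 s ltac:(by rewrite s0 sd1).
have {H2} := H2 s ltac:(by rewrite s0 sd2).
rewrite -/a -/b [p + s *: v + s *: w]addrAC.
move=> H2.
have E : F (p + s *: w + s *: v) - F (p + s *: w) - F (p + s *: v) =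
  F (p + s *: w + s *: v) - F (p + s *: v) - F (p + s *: w) by rewrite addrAC.
rewrite E in H2; move: H2.
move: (F (p + s *: w + s *: v) - F (p + s *: v) - F (p + s *: w) + F p) => D.
move=> H2 H1; clearbody s a b.
have : `|s ^+ 2 * (a - b)| <= e * s ^+ 2.
  have -> : s ^+ 2 * (a - b) = - (D - s ^+ 2 * a) + (D - s ^+ 2 * b) by ring.
  apply: (le_trans (ler_normD _ _)); rewrite normrN.
  have -> : e * s ^+ 2 = e / 2 * s ^+ 2 + e / 2 * s ^+ 2 by field.
  exact: lerD.
by rewrite normrM ger0_norm ?sqr_ge0 // mulrC ler_pM2r // exprn_gt0.
Qed.

End SC.

Section SE.
Variable R : realType.

Lemma sin_addnpi (z : R) (k : nat) : sin (z + k%:R * pi) = (-1) ^+ k * sin z.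
Proof.
elim: k => [|k IH]; first by rewrite mul0r addr0 expr0 mul1r.
rewrite mulrS mulrDl mul1r [pi + _]addrC addrA sinDpi IH exprS mulN1r mulNr //.
Qed.

Lemma sin_nonzero (a : R) (m : nat) : 0 < a < 1 -> (0 < m)%N ->
  (forall q : nat, (1 <= q)%N -> (q < m)%N -> a != q%:R / m%:R) ->
  sin (m%:R * (a * pi)) != 0.
Proof.
move=> /andP [a0 a1] m0 Hq.
have m0' : 0 < m%:R :> R by rewrite ltr0n.
set x := m%:R * a.
have x0 : 0 <= x by rewrite mulr_ge0 // ltW.
have xm : x < m%:R by rewrite /x -[X in _ < X]mulr1 ltr_pM2l.
have := truncn_itv x0; set k := Num.truncn x => /andP [kx xk].
have [y0|yne] := eqVneq (x - k%:R) 0.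
  have xk' : x = k%:R by apply/eqP; rewrite -subr_eq0 y0.
  have k1 : (1 <= k)%N.
    by rewrite -(ltr_nat R) -xk' /x mulr_gt0.
  have km : (k < m)%N by rewrite -(ltr_nat R) -xk'.
  have mne : m%:R != 0 :> R by rewrite gt_eqF.
  by move: (Hq k k1 km); rewrite -xk' /x [_ * a]mulrC mulfK // eqxx.
have y0 : 0 < x - k%:R by rewrite lt_neqAle eq_sym yne subr_ge0 kx.
have y1 : x - k%:R < 1 by move: xk; rewrite -natr1; lra.
have -> : m%:R * (a * pi) = (x - k%:R) * pi + k%:R * pi.
  by rewrite /x; clearbody k; ring.
rewrite sin_addnpi mulf_neq0 ?signr_eq0 // gt_eqF // sin_gt0_pi //.
rewrite mulr_gt0 ?pi_gt0 //= -[X in _ < X]mul1r ltr_pM2r ?pi_gt0 //.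
Qed.
End SE.


Section Alg.
Variable R : realType.
Variable Phi : seq (R * R) -> R.
Hypothesis Lin : forall l1 l2 (a b : R) v w,
  Phi (l1 ++ (a *: v + b *: w) :: l2) = a * Phi (l1 ++ v :: l2) + b * Phi (l1 ++ w :: l2).
Hypothesis Swap : forall l1 l2 v w,
  Phi (l1 ++ v :: w :: l2) = Phi (l1 ++ w :: v :: l2).

Lemma mv p v l1 l2 : Phi (p ++ v :: l1 ++ l2) = Phi (p ++ l1 ++ v :: l2).
Proof.
elim: l1 p => [|x l1 IH] p //=.
by rewrite Swap -cat_rcons IH cat_rcons.
Qed.

Lemma cat_nseq_cons (T : Type) (a : nat) (x : T) (X : seq T) :
  nseq a x ++ x :: X = nseq a.+1 x ++ X.
Proof. by elim: a => //= a ->. Qed.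

Lemma vanish (e f : R * R) (m : nat) :
  (forall v : R * R, exists a b : R, v = a *: e + b *: f) ->
  (forall l, (size l + 2 = m)%N -> Phi (l ++ [:: e; e]) + Phi (l ++ [:: f; f]) = 0) ->
  Phi (nseq m e) = 0 ->
  ((0 < m)%N -> Phi (nseq m.-1 e ++ [:: f]) = 0) ->
  forall l, size l = m -> Phi l = 0.
Proof.
move=> dec tr H0 H1.
have base : forall b a, (a + b = m)%N -> Phi (nseq a e ++ nseq b f) = 0.
  suff : forall b, (forall a, (a + b = m)%N -> Phi (nseq a e ++ nseq b f) = 0) /\
                   (forall a, (a + b.+1 = m)%N -> Phi (nseq a e ++ nseq b.+1 f) = 0).
    by move=> H b; case: (H b).
  elim=> [|b [IH1 IH2]].
    split=> a Ha.
      by rewrite addn0 in Ha; rewrite cats0 Ha.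
    have -> : a = m.-1 by rewrite -Ha addn1.
    by apply: H1; rewrite -Ha addn1.
  split; first exact: IH2.
  move=> a Ha.
  have E : nseq b.+2 f = nseq b f ++ [:: f; f] by rewrite -addn2 nseqD.
  rewrite E catA.
  have := tr (nseq a e ++ nseq b f); rewrite size_cat !size_nseq.
  move=> /(_ ltac:(by rewrite -Ha -addnA addn2)).
  have key : Phi ((nseq a e ++ nseq b f) ++ [:: e; e]) = 0.
    rewrite -catA -(mv (nseq a e) e (nseq b f) [:: e]) cat_nseq_cons.
    rewrite -(mv (nseq a.+1 e) e (nseq b f) [::]) cats0 cat_nseq_cons.
    by rewrite IH1 // -Ha !addSn !addnS.
  by rewrite key add0r => ->.
have gen : forall l a b, (size l + a + b = m)%N -> Phi (l ++ nseq a e ++ nseq b f) = 0.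
  elim=> [|v l IH] a b Hs.
    by apply: base; rewrite -Hs.
  have [al [be ->]] := dec v.
  rewrite cat_cons -[_ :: _]cat0s Lin /= -[e :: _]cat0s -[f :: _]cat0s.
  rewrite (mv [::] e l) [l ++ nseq a e ++ nseq b f]catA (mv [::] f (l ++ nseq a e) (nseq b f)) /= -!catA.
  rewrite -[e :: nseq a e ++ nseq b f]/(nseq a.+1 e ++ nseq b f) -[f :: nseq b f]/(nseq b.+1 f).
  rewrite !IH ?mulr0 ?addr0 //.
    by rewrite -Hs /= addnS addSn.
  by rewrite -Hs /= addSn addnS.
move=> l Hl; rewrite -[l]cats0 -[l ++ [::]]cats0 -catA.
by apply: (gen l 0 0); rewrite !addn0.
Qed.
End Alg.


Section Cplx.
Variable R : realType.
Variable e : R * R.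
Hypothesis ue : unit_vec e.

Definition zeta (v : R * R) : R * R := (v.1 * e.1 + v.2 * e.2, v.2 * e.1 - v.1 * e.2).
Definition cmul (z w : R * R) : R * R := (z.1 * w.1 - z.2 * w.2, z.1 * w.2 + z.2 * w.1).
Definition cprod (l : seq (R * R)) : R * R := foldr (fun v z => cmul (zeta v) z) (1, 0) l.
Definition Zf (l : seq (R * R)) : R := (cprod l).1.

Lemma pairE (z w : R * R) : z.1 = w.1 -> z.2 = w.2 -> z = w.
Proof. by case: z; case: w => /= ? ? ? ? -> ->. Qed.

Lemma cmulA z w y : cmul z (cmul w y) = cmul (cmul z w) y.
Proof. by apply: pairE; rewrite /cmul /=; ring. Qed.

Lemma cmul1 z : cmul z (1, 0) = z.
Proof. by apply: pairE; rewrite /cmul /=; ring. Qed.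

Lemma cprod_cat l1 l2 : cprod (l1 ++ l2) = cmul (cprod l1) (cprod l2).
Proof.
elim: l1 => [|v l1 IH] /=.
  by apply: pairE; rewrite /cmul /=; ring.
by rewrite IH cmulA.
Qed.

Lemma cprod_cons x l : cprod (x :: l) = cmul (zeta x) (cprod l).
Proof. by []. Qed.

Lemma cprod_nil : cprod [::] = (1, 0).
Proof. by []. Qed.

Lemma Zf_lin l1 l2 (a b : R) v w :
  Zf (l1 ++ (a *: v + b *: w) :: l2) = a * Zf (l1 ++ v :: l2) + b * Zf (l1 ++ w :: l2).
Proof.
rewrite /Zf !cprod_cat /=.
move: (cprod l1) (cprod l2) => P Q.
have h1 : (a *: v + b *: w).1 = a * v.1 + b * w.1 by [].
have h2 : (a *: v + b *: w).2 = a * v.2 + b * w.2 by [].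
have sc : forall x y : R, x *: y = x * y by [].
rewrite /cmul /zeta /= !sc; ring.
Qed.

Lemma Zf_swap l1 l2 v w : Zf (l1 ++ v :: w :: l2) = Zf (l1 ++ w :: v :: l2).
Proof.
rewrite /Zf !cprod_cat /=.
move: (cprod l1) (cprod l2) => P Q.
rewrite /cmul /zeta /=; ring.
Qed.

Lemma zeta_e : zeta e = (1, 0).
Proof. by apply: pairE; rewrite /zeta /= -?ue; [|]; ring. Qed.

Lemma zeta_f : zeta (normal e) = (0, 1).
Proof. by apply: pairE; rewrite /zeta /normal /= -?ue; [|]; ring. Qed.

Lemma cprod_nseq_e k : cprod (nseq k e) = (1, 0).
Proof.
elim: k => [|k IH] //=.
by rewrite IH zeta_e; apply: pairE; rewrite /cmul /=; ring.
Qed.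

Lemma Zf_e k : Zf (nseq k e) = 1.
Proof. by rewrite /Zf cprod_nseq_e. Qed.

Lemma Zf_ef k : Zf (nseq k e ++ [:: normal e]) = 0.
Proof.
rewrite /Zf cprod_cat cprod_nseq_e cprod_cons cprod_nil zeta_f /cmul /=; ring.
Qed.

Lemma Zf_tr l : Zf (l ++ [:: e; e]) + Zf (l ++ [:: normal e; normal e]) = 0.
Proof.
rewrite /Zf !cprod_cat !cprod_cons cprod_nil zeta_e zeta_f.
move: (cprod l) => P; rewrite /cmul /=; ring.
Qed.

Lemma decomp (v : R * R) : exists a b : R, v = a *: e + b *: normal e.
Proof.
exists (v.1 * e.1 + v.2 * e.2), (v.2 * e.1 - v.1 * e.2).
have sc : forall x y : R, x *: y = x * y by [].
apply: pairE => /=; rewrite /normal /= !sc.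
  by transitivity (v.1 * (e.1 ^+ 2 + e.2 ^+ 2)); [rewrite ue mulr1|ring].
by transitivity (v.2 * (e.1 ^+ 2 + e.2 ^+ 2)); [rewrite ue mulr1|ring].
Qed.

Lemma Zf_rot (th : R) k :
  Zf (nseq k (rotate th e) ++ [:: normal (rotate th e)]) = - sin (k.+1%:R * th).
Proof.
have zr : zeta (rotate th e) = (cos th, sin th).
  apply: pairE; rewrite /zeta /rotate /=.
    by transitivity (cos th * (e.1 ^+ 2 + e.2 ^+ 2)); [ring|rewrite ue mulr1].
  by transitivity (sin th * (e.1 ^+ 2 + e.2 ^+ 2)); [ring|rewrite ue mulr1].
have zn : zeta (normal (rotate th e)) = (- sin th, cos th).
  apply: pairE; rewrite /zeta /rotate /normal /=.
    by transitivity (- sin th * (e.1 ^+ 2 + e.2 ^+ 2)); [ring|rewrite ue mulr1].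
  by transitivity (cos th * (e.1 ^+ 2 + e.2 ^+ 2)); [ring|rewrite ue mulr1].
have cn : forall j, cprod (nseq j (rotate th e)) = (cos (j%:R * th), sin (j%:R * th)).
  elim=> [|j IH].
    by rewrite /= mul0r cos0 sin0.
  have -> : cprod (nseq j.+1 (rotate th e)) = cmul (zeta (rotate th e)) (cprod (nseq j (rotate th e))) by [].
  rewrite IH zr; apply: pairE; rewrite /cmul /= mulrS mulrDl mul1r.
    by rewrite cosD.
  by rewrite sinD; ring.
rewrite /Zf cprod_cat cn cprod_cons cprod_nil zn /cmul /= [k.+1%:R]mulrS mulrDl mul1r sinD; ring.
Qed.
End Cplx.


Section Smooth.
Variable R : realType.
Variable Omega : set (R * R).
Hypothesis oO : open Omega.

Lemma nearO {p : R * R} : Omega p -> \forall q \near p, Omega q.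
Proof. by move=> Op; apply: open_nbhs_nbhs; split. Qed.

Lemma ballO {p : R * R} : Omega p -> exists2 r : R, 0 < r & forall q, `|p - q| < r -> Omega q.
Proof.
move=> /nearO /nbhs_normP [r r0 H]; exists r => // q pq; exact: H.
Qed.

Definition Deq (F G : R * R -> R) := forall p, Omega p -> F p = G p.

Lemma Deq_sym {F G} : Deq F G -> Deq G F.
Proof. by move=> H p Op; rewrite H. Qed.

Lemma Deq_trans {F G H} : Deq F G -> Deq G H -> Deq F H.
Proof. by move=> H1 H2 p Op; rewrite H1 // H2. Qed.

Lemma Deq_D {F G} (v : R * R) : Deq F G -> Deq ('D_v F) ('D_v G).
Proof.
move=> FG p Op; apply: near_eq_derive.
by have := nearO Op; apply: filterS => q Oq; apply: FG.
Qed.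

Lemma Deq_diff {F G p} : Deq F G -> Omega p -> differentiable F p -> differentiable G p.
Proof.
move=> FG Op; apply: near_eq_differentiable.
by have := nearO Op; apply: filterS => q Oq; apply: FG.
Qed.

Lemma Deq_iterdy {F G} j : Deq F G -> Deq (iter j (@dy R) F) (iter j (@dy R) G).
Proof. by move=> FG; elim: j => //= j IH; exact: Deq_D. Qed.

Lemma Deq_iterdx {F G} j : Deq F G -> Deq (iter j (@dx R) F) (iter j (@dx R) G).
Proof. by move=> FG; elim: j => //= j IH; exact: Deq_D. Qed.

Lemma Deq_pdiff {F G} i j : Deq F G -> Deq (pdiff F i j) (pdiff G i j).
Proof. by move=> FG; apply: Deq_iterdx; apply: Deq_iterdy. Qed.

Definition K F := smooth_on Omega F.

Lemma K_diff {F p} : K F -> Omega p -> differentiable F p.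
Proof. by move=> KF Op; exact: (KF 0%N 0%N p Op). Qed.

Lemma K_Deq {F G} : Deq F G -> K F -> K G.
Proof.
move=> FG KF i j p Op; apply: (Deq_diff (Deq_pdiff i j FG)) => //; exact: KF.
Qed.

Lemma K_dy {F} : K F -> K (dy F).
Proof.
move=> KF i j p Op; rewrite /pdiff -iterSr; exact: (KF i j.+1 p Op).
Qed.

Lemma K_iterdy {F} j : K F -> K (iter j (@dy R) F).
Proof. by move=> KF; elim: j => //= j IH; exact: K_dy. Qed.

Lemma young_O (F : R * R -> R) (v w p : R * R) : (forall q, Omega q -> differentiable F q) -> Omega p ->
  differentiable ('D_v F) p -> differentiable ('D_w F) p ->
  'D_w ('D_v F) p = 'D_v ('D_w F) p.
Proof.
move=> dF Op dv dw; have [r r0 Hr] := ballO Op.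
by apply: (@young R _ F v w p r r0) => // q pq; apply: dF; apply: Hr.
Qed.

Lemma swap_xy {F} : K F -> Deq (dy (dx F)) (dx (dy F)).
Proof.
move=> KF p Op; apply: young_O => //.
- by move=> q Oq; exact: K_diff.
- exact: (KF 1%N 0%N p Op).
- exact: (KF 0%N 1%N p Op).
Qed.

Lemma K_dx {F} : K F -> K (dx F).
Proof.
move=> KF.
have E : forall j, Deq (iter j (@dy R) (dx F)) (dx (iter j (@dy R) F)).
  elim=> [|j IH] //=.
  exact: (Deq_trans (Deq_D ((0:R), (1:R)) IH) (swap_xy (K_iterdy j KF))).
move=> i j p Op.
have E2 : Deq (pdiff F i.+1 j) (pdiff (dx F) i j).
  rewrite /pdiff iterSr; apply: Deq_iterdx; apply: Deq_sym; exact: E.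
exact: (Deq_diff E2 Op (KF i.+1 j p Op)).
Qed.

Definition lc (a b : R) (F G : R * R -> R) := fun q => a * F q + b * G q.

Lemma lcE a b F G : lc a b F G = a *: F + b *: G.
Proof. by apply/funext => q. Qed.

Lemma lc_diff a b {F G p} : differentiable F p -> differentiable G p ->
  differentiable (lc a b F G) p.
Proof.
by move=> dF dG; rewrite lcE; apply: differentiableD; apply: differentiableZ.
Qed.

Lemma Dlc a b {F G} v {p} : differentiable F p -> differentiable G p ->
  'D_v (lc a b F G) p = a * 'D_v F p + b * 'D_v G p.
Proof.
move=> dF dG; have dF' : derivable F p v := diff_derivable dF.
have dG' : derivable G p v := diff_derivable dG.
rewrite lcE deriveD; last exact: derivableZ.
  by rewrite !deriveZ.
exact: derivableZ.
Qed.

Lemma Deq_lc a b {F1 G1 F2 G2} : Deq F1 F2 -> Deq G1 G2 -> Deq (lc a b F1 G1) (lc a b F2 G2).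
Proof. by move=> H1 H2 p Op; rewrite /lc H1 // H2. Qed.

Lemma Deq_Dlc a b {F G} v : (forall p, Omega p -> differentiable F p) ->
  (forall p, Omega p -> differentiable G p) ->
  Deq ('D_v (lc a b F G)) (lc a b ('D_v F) ('D_v G)).
Proof. by move=> dF dG p Op; rewrite Dlc //; [apply: dF|apply: dG]. Qed.

Lemma K_lc a b {F G} : K F -> K G -> K (lc a b F G).
Proof.
move=> KF KG.
have Ey : forall j, Deq (iter j (@dy R) (lc a b F G))
    (lc a b (iter j (@dy R) F) (iter j (@dy R) G)).
  elim=> [|j IH] //=.
  apply: Deq_trans (Deq_D _ IH) _.
  by apply: Deq_Dlc => p Op; [exact: (KF 0%N j)|exact: (KG 0%N j)].
have Ex : forall i j, Deq (pdiff (lc a b F G) i j) (lc a b (pdiff F i j) (pdiff G i j)).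
  move=> i j; elim: i => [|i IH] //=.
  apply: Deq_trans (Deq_D _ IH) _.
  by apply: Deq_Dlc => p Op; [exact: (KF i j)|exact: (KG i j)].
move=> i j p Op; apply: (Deq_diff (Deq_sym (Ex i j))) => //.
by apply: lc_diff; [exact: KF|exact: KG].
Qed.

Lemma D_linv (F : R * R -> R) p (a b : R) (v w : R * R) : differentiable F p ->
  'D_(a *: v + b *: w) F p = a * 'D_v F p + b * 'D_w F p.
Proof. by move=> dF; rewrite !deriveE // linearD !linearZ. Qed.

Lemma pair_decomp (v : R * R) : v = v.1 *: ((1:R), (0:R)) + v.2 *: ((0:R), (1:R)).
Proof.
have sc : forall x y : R, x *: y = x * y by [].
by apply: pairE => /=; rewrite !sc; ring.
Qed.

Lemma Deq_Ddecomp {F} (v : R * R) : K F -> Deq ('D_v F) (lc v.1 v.2 (dx F) (dy F)).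
Proof.
move=> KF p Op; rewrite {1}(pair_decomp v) D_linv //; exact: K_diff.
Qed.

Lemma K_D {F} (v : R * R) : K F -> K ('D_v F).
Proof.
move=> KF; apply: (K_Deq (Deq_sym (Deq_Ddecomp v KF))).
by apply: K_lc; [exact: K_dx|exact: K_dy].
Qed.

Definition Wd (F : R * R -> R) (l : seq (R * R)) : R * R -> R :=
  foldr (fun v G => 'D_v G) F l.

Lemma K_Wd {F} l : K F -> K (Wd F l).
Proof. by move=> KF; elim: l => //= v l IH; exact: K_D. Qed.

Lemma Wd_cat F l1 l2 : Wd F (l1 ++ l2) = Wd (Wd F l2) l1.
Proof. exact: foldr_cat. Qed.

Lemma Deq_Wd {F G} l : Deq F G -> Deq (Wd F l) (Wd G l).
Proof. by move=> FG; elim: l => //= v l IH; exact: Deq_D. Qed.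

Lemma swapD {F} (v w : R * R) : K F -> Deq ('D_w ('D_v F)) ('D_v ('D_w F)).
Proof.
move=> KF p Op; apply: young_O => //.
- by move=> q Oq; exact: K_diff.
- exact: K_diff (K_D v KF) Op.
- exact: K_diff (K_D w KF) Op.
Qed.

Lemma Wd_lc a b {F G} l : K F -> K G -> Deq (Wd (lc a b F G) l) (lc a b (Wd F l) (Wd G l)).
Proof.
move=> KF KG; elim: l => [|v l IH] //=.
apply: Deq_trans (Deq_D _ IH) _.
apply: Deq_Dlc => p Op; apply: K_diff => //; exact: K_Wd.
Qed.

Lemma Wd_swap {F} l1 l2 (v w : R * R) : K F ->
  Deq (Wd F (l1 ++ v :: w :: l2)) (Wd F (l1 ++ w :: v :: l2)).
Proof.
move=> KF; rewrite !Wd_cat; apply: Deq_Wd => /=.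
exact: (swapD w v (K_Wd l2 KF)).
Qed.

Lemma Wd_slot {F} l1 l2 (a b : R) (v w : R * R) : K F ->
  Deq (Wd F (l1 ++ (a *: v + b *: w) :: l2))
      (lc a b (Wd F (l1 ++ v :: l2)) (Wd F (l1 ++ w :: l2))).
Proof.
move=> KF; rewrite !Wd_cat.
have K2 := K_Wd l2 KF.
apply: Deq_trans (Wd_lc a b l1 (K_D v K2) (K_D w K2)).
apply: Deq_Wd => p Op /=; rewrite D_linv //; exact: K_diff.
Qed.

Lemma seg_zero {G} (v x0 : R * R) (h : R) : K G -> 0 < h -> Omega x0 ->
  (forall t, 0 < t < h -> Omega (x0 + t *: v)) ->
  (forall t, 0 < t < h -> G (x0 + t *: v) = 0) ->
  forall k, Wd G (nseq k v) x0 = 0.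
Proof.
move=> KG h0 Ox0 Oseg HG.
have step : forall k t, 0 < t < h -> Wd G (nseq k v) (x0 + t *: v) = 0.
  elim=> [|k IH] t th; first exact: HG.
  have dH : differentiable (Wd G (nseq k v)) (x0 + t *: v).
    exact: K_diff (K_Wd _ KG) (Oseg t th).
  change (derive (Wd G (nseq k v)) (x0 + t *: v) v = 0).
  have [_ <-] := @line_derive R _ _ _ _ _ dH.
  rewrite (@near_eq_derive _ _ _ _ (cst 0)); first by rewrite derive_cst.
  have tin : t \in `]0, h[ by rewrite in_itv.
  have := near_in_itvoo tin; apply: filterS => s; rewrite in_itv /= => sh.
  exact: IH.
move=> k.
set psi := fun s : R => Wd G (nseq k v) (x0 + s *: v).
have -> : Wd G (nseq k v) x0 = psi 0 by rewrite /psi scale0r addr0.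
have dpsi : derivable psi 0 1.
  apply: line_derivable; rewrite scale0r addr0; exact: K_diff (K_Wd _ KG) Ox0.
have cpsi : psi @ 0^'+ --> psi 0.
  apply: cvg_at_right_filter.
  exact: differentiable_continuous (proj1 (derivable1_diffP _ _) dpsi).
have zpsi : psi @ 0^'+ --> (0 : R).
  apply: cvg_near_cst; near=> s.
  rewrite /psi step //; apply/andP; split; near: s.
    exact: nbhs_right_gt.
  exact: nbhs_right_lt.
exact: (cvg_unique _ cpsi zpsi).
Unshelve. all: by end_near. Qed.
End Smooth.


Section Two.
Variable R : realType.
Variable Phi : seq (R * R) -> R.
Hypothesis Lin : forall l1 l2 (a b : R) v w,
  Phi (l1 ++ (a *: v + b *: w) :: l2) = a * Phi (l1 ++ v :: l2) + b * Phi (l1 ++ w :: l2).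

Definition eX : R * R := ((1:R), (0:R)).
Definition eY : R * R := ((0:R), (1:R)).

Lemma two_slot l (v w : R * R) :
  let X := eX in let Y := eY in
  Phi (l ++ [:: v; w]) =
   v.1 * (w.1 * Phi (l ++ [:: X; X]) + w.2 * Phi (l ++ [:: X; Y])) +
   v.2 * (w.1 * Phi (l ++ [:: Y; X]) + w.2 * Phi (l ++ [:: Y; Y])).
Proof.
move=> X Y.
have E : forall z, Phi (l ++ [:: z; w]) = w.1 * Phi (l ++ [:: z; X]) + w.2 * Phi (l ++ [:: z; Y]).
  move=> z; rewrite -[l ++ [:: z; _]]/(l ++ [:: z] ++ [:: _]) !catA.
  by rewrite {1}(@pair_decomp R w) Lin -!catA.
by rewrite {1}(@pair_decomp R v) Lin !E.
Qed.
End Two.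

Lemma pd20 (R : realType) (u : R * R -> R) : pdiff u 2 0 = Wd R u [:: eX R; eX R].
Proof. reflexivity. Qed.
Lemma pd02 (R : realType) (u : R * R -> R) : pdiff u 0 2 = Wd R u [:: eY R; eY R].
Proof. reflexivity. Qed.

Lemma Wd_nseq (R : realType) (F : R * R -> R) (v : R * R) k :
  Wd R F (nseq k v) = iter k (fun G => 'D_v G) F.
Proof. by elim: k => //= k ->. Qed.



Lemma key1 (R : realType) (lambda P Q S T Z : R) :
  S = 1 * P + 1 * Q -> T = - lambda * Z + 0 * Z -> S = T -> Z = 0 -> P + Q = 0.
Proof. by move=> -> -> H Z0; move: H; rewrite Z0 mulr0 mul0r addr0 !mul1r. Qed.

Lemma key2 (R : realType) (a b xx yy xy : R) : a ^+ 2 + b ^+ 2 = 1 -> xx + yy = 0 ->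
  a * (a * xx + b * xy) + b * (a * xy + b * yy) +
  (- b * (- b * xx + a * xy) + a * (- b * xy + a * yy)) = 0.
Proof.
move=> ab xy0; transitivity ((a ^+ 2 + b ^+ 2) * (xx + yy)); first by ring.
by rewrite xy0 mulr0.
Qed.

Lemma key3 (R : realType) (a b c P Q Z1 Z2 : R) :
  a * P + b * Q - c * (a * Z1 + b * Z2) = a * (P - c * Z1) + b * (Q - c * Z2).
Proof. by ring. Qed.

Lemma key4 (R : realType) (c w1 w2 z1 z2 : R) :
  w1 + w2 = 0 -> z1 + z2 = 0 -> (w1 - c * z1) + (w2 - c * z2) = 0.
Proof.
move=> w0 z0; transitivity ((w1 + w2) - c * (z1 + z2)); first by ring.
by rewrite w0 z0 mulr0 subr0.
Qed.

Theorem theorem3p6 (R : realType) (Omega : set (R * R)) (lambda : R)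
  (u : R * R -> R) (x0 em ep : R * R) (h alpha C1 : R) (n : nat) :
  open Omega ->
  0 < lambda ->
  smooth_on Omega u ->
  L2_on Omega u ->
  (forall p, Omega p -> - (pdiff u 2 0 p + pdiff u 0 2 p) = lambda * u p) ->
  Omega x0 ->
  0 < h ->
  0 < alpha < 1 ->
  unit_vec em ->
  ep = rotate (alpha * pi) em ->
  segment x0 ep h `<=` Omega ->
  segment x0 em h `<=` Omega ->
  singular_line u x0 ep h ->
  C1 != 0 ->
  gen_singular_line u (fun _ => C1) x0 em h ->
  (3 <= n)%N ->
  u x0 = 0 ->
  (forall p q : nat, (1 <= q)%N -> (q < p)%N -> (p <= n.-1)%N ->
     alpha != q%:R / p%:R) ->
  vanishes_up_to u x0 n.
Proof.
move=> oO lam0 Ku _ Helm Ox0 h0 aI ue epE segp segm sing C1n0 gsing n3 ux0 Halpha.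

have Ku' : K R Omega u := Ku.
have Lin : forall l1 l2 (a b : R) v w, Wd R u (l1 ++ (a *: v + b *: w) :: l2) x0 =
    a * Wd R u (l1 ++ v :: l2) x0 + b * Wd R u (l1 ++ w :: l2) x0.
  by move=> l1 l2 a b v w; exact: (@Wd_slot R Omega oO u l1 l2 a b v w Ku' x0 Ox0).
have Swap : forall l1 l2 v w, Wd R u (l1 ++ v :: w :: l2) x0 = Wd R u (l1 ++ w :: v :: l2) x0.
  by move=> l1 l2 v w; exact: (@Wd_swap R Omega oO u l1 l2 v w Ku' x0 Ox0).
have segP : forall v t, 0 < t < h -> segment x0 v h (x0 + t *: v).
  by move=> v t /andP [t0 th]; exists t; rewrite ?ltW.
have segO : forall v t, segment x0 v h `<=` Omega -> 0 < t < h -> Omega (x0 + t *: v).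
  by move=> v t S th; apply: S; exact: segP.
have main : forall m, (m < n)%N -> forall l, size l = m -> Wd R u l x0 = 0.
  elim/ltn_ind => m IH mn l sl.
  case: m IH mn sl => [|m] IH mn sl.
    by case: l sl => // _; exact: ux0.
  have IH' : forall l', (size l' < m.+1)%N -> Wd R u l' x0 = 0.
    move=> l' s'; apply: (IH (size l')) => //; exact: ltn_trans s' mn.
  have H1 : Wd R u (nseq m em ++ [:: normal em]) x0 = 0.
    pose G := lc R 1 C1 ('D_(normal em) u) u.
    have KG : K R Omega G := @K_lc R Omega oO 1 C1 _ _ (@K_D R Omega oO _ (normal em) Ku') Ku'.
    have Z0 : forall t, 0 < t < h -> G (x0 + t *: em) = 0.
      move=> t th; rewrite /G /lc mul1r; exact: (gsing _ (segP em t th)).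
    have := @seg_zero R Omega oO _ em x0 h KG h0 Ox0 (fun t th => segO em t segm th) Z0 m.
    rewrite (@Wd_lc R Omega oO 1 C1 _ _ (nseq m em) (@K_D R Omega oO _ (normal em) Ku') Ku' x0 Ox0).
    rewrite /lc mul1r IH' ?size_nseq // mulr0 addr0.
    by rewrite Wd_cat.
  have H2 : Wd R u (nseq m ep ++ [:: normal ep]) x0 = 0.
    rewrite Wd_cat.
    apply: (@seg_zero R Omega oO _ ep x0 h (@K_D R Omega oO _ (normal ep) Ku') h0 Ox0 (fun t th => segO ep t segp th)).
    move=> t th; exact: (sing _ (segP ep t th)).
  have tr : forall l, (size l + 2 = m.+1)%N ->
      Wd R u (l ++ [:: em; em]) x0 + Wd R u (l ++ [:: normal em; normal em]) x0 = 0.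
    move=> l0 sl0.
    have W0 : Wd R u l0 x0 = 0.
      by apply: IH'; move: sl0; rewrite addn2 => [[->]].
    have XY0 : Wd R u (l0 ++ [:: eX R; eX R]) x0 + Wd R u (l0 ++ [:: eY R; eY R]) x0 = 0.
      have A1 := @Wd_lc R Omega oO 1 1 (Wd R u [:: (eX R); (eX R)]) (Wd R u [:: (eY R); (eY R)]) l0
        (@K_Wd R Omega oO _ [:: (eX R); (eX R)] Ku') (@K_Wd R Omega oO _ [:: (eY R); (eY R)] Ku') x0 Ox0.
      have A2 := @Wd_lc R Omega oO (- lambda) 0 u u l0 Ku' Ku' x0 Ox0.
      have DE : Deq R Omega (lc R 1 1 (Wd R u [:: (eX R); (eX R)]) (Wd R u [:: (eY R); (eY R)]))
          (lc R (- lambda) 0 u u).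
        move=> p Op; have := Helm p Op; rewrite pd20 pd02 /lc; cbv beta.
        move: (Wd R u [:: eX R; eX R] p) (Wd R u [:: eY R; eY R] p) (u p) => A B U HH.
        lra.
      have A3 := @Deq_Wd R Omega oO _ _ l0 DE x0 Ox0.
      rewrite !Wd_cat.
      exact: (@key1 R lambda _ _ _ _ _ A1 A2 A3 W0).
    have TS : forall l (v w : R * R), Wd R u (l ++ [:: v; w]) x0 =
       v.1 * (w.1 * Wd R u (l ++ [:: (eX R); (eX R)]) x0 + w.2 * Wd R u (l ++ [:: (eX R); (eY R)]) x0) +
       v.2 * (w.1 * Wd R u (l ++ [:: (eY R); (eX R)]) x0 + w.2 * Wd R u (l ++ [:: (eY R); (eY R)]) x0).
      exact: (@two_slot R (fun l => Wd R u l x0) Lin).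
    rewrite (TS l0 em em) (TS l0 (normal em) (normal em)).
    rewrite (Swap l0 [::] (eY R) (eX R)).
    have n1 : (normal em).1 = - em.2 by [].
    have n2 : (normal em).2 = em.1 by [].
    rewrite n1 n2.
    exact: (@key2 R _ _ _ _ _ ue XY0).
  have [c cE] : exists c, c = Wd R u (nseq m.+1 em) x0 by eexists.
  have V : forall l, size l = m.+1 -> Wd R u l x0 - c * Zf R em l = 0.
    apply: (@vanish R (fun l => Wd R u l x0 - c * Zf R em l) _ _ em (normal em) m.+1).
    - by move=> l1 l2 a b v w; cbv beta; rewrite Lin Zf_lin key3.
    - by move=> l1 l2 v w; cbv beta; rewrite Swap Zf_swap.
    - exact: decomp.
    - by move=> l0 sl0; cbv beta; apply: key4; [exact: tr|exact: Zf_tr].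
    - by cbv beta; rewrite -cE Zf_e // mulr1 subrr.
    - by move=> _; cbv beta; rewrite /= H1 Zf_ef // mulr0 subr0.
  have c0 : c = 0.
    have := V _ (ltac:(by rewrite size_cat size_nseq addn1) : size (nseq m ep ++ [:: normal ep]) = m.+1).
    rewrite H2 epE Zf_rot // sub0r mulrN opprK => /eqP; rewrite mulf_eq0 => /orP [/eqP //|].
    move=> /eqP S; exfalso; move: S; apply/eqP.
    apply: sin_nonzero => //.
    move=> q q1 qm; apply: Halpha => //.
    by rewrite -ltnS prednK // (leq_trans _ n3).
  by have := V l sl; rewrite c0 mul0r subr0.
move=> i j ijn.
have E : size (nseq i (eX R) ++ nseq j (eY R)) = (i + j)%N by rewrite size_cat !size_nseq.
have := main (i + j)%N ijn _ E.
by rewrite Wd_cat !Wd_nseq => H; exact: H.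
Qed.
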